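(* Let $d\ge 3$ and let $U$ be the $d\times d$ cyclic shift (circulant) matrix, i.e. $U_{i,j}=1$ if $j\equiv i+1 \pmod d$ and $U_{i,j}=0$ otherwise, with indices $i,j\in\{1,\dots,d\}$. For $k>0$ let $$S(k)=\big((k-1)I+(k+1)U\big)\big((k+1)I+(k-1)U\big)^{-1}.$$ Then: (a) If $d$ is even, $\lim_{k\to\infty}S_{i,j}(k)=\delta_{i,j}-\frac{2}{d}(-1)^{i+j}$ for all $i,j$. (b) If $d$ is odd, $\lim_{k\to\infty}S(k)=I$. In both cases the limiting matrix is symmetric.
   Context: $S(k)$ is the vertex scattering matrix of the ''preferred orientation'' vertex condition $(U-I)\Psi(v)+i(U+I)\Psi'(v)=0$ at a vertex of degree $d$. The edges at the vertex are labelled $1,\dots,d$. *)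

(* Defs.v *)
From HB Require Import structures.
From mathcomp Require Import all_boot all_order all_algebra.
From mathcomp Require Import all_classical all_reals all_analysis.
Set Implicit Arguments. Unset Strict Implicit. Unset Printing Implicit Defensive.
Import Order.TTheory GRing.Theory Num.Theory.
Local Open Scope ring_scope.

(* Cyclic shift matrix, 0-based indices: U i j = 1 iff j = i+1 mod d. *)
Definition shiftU (R : pzRingType) (d : nat) : 'M[R]_d :=
  \matrix_(i < d, j < d) ((nat_of_ord j == (i.+1 %% d)%N)%:R).

Definition Smat (R : realType) (d : nat) (k : R) : 'M[R]_d :=
  ((k - 1)%:M + (k + 1) *: shiftU R d) *m invmx ((k + 1)%:M + (k - 1) *: shiftU R d).

(* Main.v *)
Require Import Defs.
From HB Require Import structures.
From mathcomp Require Import all_boot all_order all_algebra.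
From mathcomp Require Import all_classical all_reals all_analysis.
From mathcomp Require Import ring lra.
Import Order.TTheory GRing.Theory Num.Theory.
Import numFieldNormedType.Exports.
Lemma modeq (d i j m : nat) : (0 < d)%N -> (j < d)%N -> (m < d)%N ->
  (j == (i + m) %% d)%N = (m == (j + (d - i %% d)) %% d)%N.
Proof.
move=> d0 jd md.
have hi : (i %% d < d)%N by rewrite ltn_pmod.
have E1 : (j == (i + m) %% d) = (j + (d - i %% d) == (i + m) + (d - i %% d) %[mod d]).
  by rewrite eqn_modDr (modn_small jd).
have E2 : ((i + m) + (d - i %% d)) %% d = m.
  by rewrite {1}(divn_eq i d) -!addnA modnMDl addnCA (subnKC (ltnW hi)) modnDr (modn_small md).
by rewrite E1 E2 eq_sym.
Qed.

Local Open Scope classical_set_scope.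
Local Open Scope ring_scope.

Lemma UX (R : pzRingType) n (m : nat) (i j : 'I_n.+1) :
  (shiftU R n.+1 ^+ m) i j = (nat_of_ord j == (i + m) %% n.+1)%N%:R.
Proof.
elim: m j => [|m IH] j.
  by rewrite expr0 !mxE addn0 modn_small // eq_sym.
rewrite exprSr -mulmxE mxE.
pose l0 : 'I_n.+1 := Ordinal (ltn_pmod (i + m) (ltn0Sn n)).
rewrite (bigD1 l0) //= big1 ?addr0.
  rewrite IH /l0 /= eqxx mul1r !mxE /=.
  have -> : (((i + m) %% n.+1).+1 %% n.+1 = (i + m.+1) %% n.+1)%N.
    by rewrite -addn1 modnDml addn1 addnS.
  by [].
move=> l /negbTE nl; rewrite IH.
have -> : (nat_of_ord l == (i + m) %% n.+1)%N = false.
  by apply/negbTE; apply: contraFN nl => /eqP h; apply/eqP/val_inj.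
by rewrite mul0r.
Qed.

Lemma Uexpd (R : pzRingType) n : shiftU R n.+1 ^+ n.+1 = 1.
Proof.
apply/matrixP => i j; rewrite UX !mxE modnDr modn_small //.
by rewrite eq_sym.
Qed.

Lemma APgen (R : comNzRingType) (A : algType R) (u : A) n (a b : R) :
  u ^+ n.+1 = 1 ->
  (a%:A + b *: u) * (\sum_(m < n.+1) (a ^+ (n - m) * (- b) ^+ m) *: u ^+ m)
  = (a ^+ n.+1 - (- b) ^+ n.+1)%:A.
Proof.
move=> hu.
have hc : GRing.comm (a%:A) ((- b) *: u).
  by rewrite /GRing.comm -scalerAl mul1r -scalerAr mulr1.
have H := subrXX_comm n.+1 hc.
have sX : forall (c : R) e, (c%:A : A) ^+ e = (c ^+ e)%:A.
  by move=> c e; rewrite exprZn expr1n.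
rewrite !exprZn hu expr1n -scalerBl in H.
rewrite H scaleNr opprK; congr (_ * _).
apply: eq_bigr => m _.
by rewrite -scaleNr sX exprZn -scalerAl mul1r scalerA.
Qed.

Lemma Sform (R : realType) n (k : R) :
  let U := shiftU R n.+1 in
  let D := (k + 1) ^+ n.+1 - (- (k - 1)) ^+ n.+1 in
  D != 0 ->
  Smat n.+1 k = 1%:M + (2 / D) *:
     \sum_(m < n.+1) ((k + 1) ^+ (n - m) * (- (k - 1)) ^+ m) *: (U ^+ m.+1 - U ^+ m).
Proof.
move=> U D hD.
set P := \sum_(m < n.+1) ((k + 1) ^+ (n - m) * (- (k - 1)) ^+ m) *: U ^+ m.
set A := (k + 1)%:M + (k - 1) *: U.
have hAP : A *m P = D%:M.
  have eA : forall c : R, (c%:A : 'M[R]_n.+1) = c%:M.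
    by move=> c; rewrite -scalemx1.
  have := @APgen _ _ U n (k + 1) (k - 1) (Uexpd R n).
  rewrite !eA mulmxE => ->.
  by rewrite /D.
have hinv : invmx A = D^-1 *: P.
  have h1 : A *m (D^-1 *: P) = 1%:M.
    by rewrite -scalemxAr hAP -scalemx1 scalerA mulVf // scale1r.
  have [hu _] := mulmx1_unit h1.
  by rewrite -[RHS]mul1mx -(mulVmx hu) -mulmxA h1 mulmx1.
rewrite /Smat -/U -/A hinv.
have hB : (k - 1)%:M + (k + 1) *: U = A + 2 *: (U - 1%:M).
  rewrite /A scalerBr scalemx1; apply/matrixP => i j; rewrite !mxE.
  by case: (i == j) => /=; rewrite ?mulr1n ?mulr0n; ring.
rewrite hB mulmxDl -!scalemxAr hAP -scalemx1 scalerA mulVf // scale1r.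
congr (_ + _).
rewrite -scalemxAl scalerA mulrC.
congr (_ *: _).
rewrite /P mulmx_sumr; apply: eq_bigr => m _.
rewrite -scalemxAr mulmxBl mul1mx; congr (_ *: (_ - _)).
by rewrite mulmxE -exprS.
Qed.

Lemma sum_sign (R : pzRingType) (d i : nat) (j : 'I_d) : ~~ odd d ->
  \sum_(m < d) (-1) ^+ m * (nat_of_ord j == (i + m) %% d)%N%:R = (-1) ^+ (i + j) :> R.
Proof.
move=> ev.
have d0 : (0 < d)%N by case: d j ev => [[]|].
have md0 : ((j + (d - i %% d)) %% d < d)%N by rewrite ltn_pmod.
pose m0 : 'I_d := Ordinal md0.
rewrite (bigD1 m0) //= big1 ?addr0.
  rewrite modeq // eqxx mulr1 -signr_odd -[in RHS]signr_odd.
  congr (_ ^+ _).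
  rewrite /m0 /= (odd_mod _ (negbTE ev)) oddD.
  rewrite oddB; last exact: ltnW (ltn_pmod i d0).
  rewrite (negbTE ev) (odd_mod _ (negbTE ev)) oddD.
  by case: (odd i); case: (odd j).
move=> m hm; rewrite modeq //.
have -> : (nat_of_ord m == (j + (d - i %% d)) %% d)%N = false.
  by apply/negbTE; apply: contra hm => /eqP h; apply/eqP/val_inj.
by rewrite mulr0.
Qed.

Lemma hinv (R : realType) : (k : R)^-1 @[k --> +oo] --> 0.
Proof.
have := (gtr0_cvgV0 (f:=id) _).2 cvg_id.
apply.
by exists 0; split => // x.
Qed.

Lemma cvgPoly (R : realType) (p : {poly R}) : p.[k^-1] @[k --> +oo] --> p.[0].
Proof.
apply: (cvg_comp (fun k : R => k^-1) (horner p)); first exact: hinv.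
exact: continuous_horner.
Qed.

Lemma Dpos (R : realType) n (k : R) : 1 < k ->
  0 < (k + 1) ^+ n.+1 - (- (k - 1)) ^+ n.+1.
Proof.
move=> hk; rewrite subr_gt0.
apply: (le_lt_trans (ler_norm _)).
rewrite normrX normrN ger0_norm; last by lra.
by rewrite ltrXn2r //; lra.
Qed.

Lemma Sentry (R : realType) n (i j : 'I_n.+1) (k : R) : 1 < k ->
  let U := shiftU R n.+1 in
  let e := fun m : nat => (U ^+ m.+1) i j - (U ^+ m) i j in
  let Np := \sum_(m < n.+1) ((1 + 'X) ^+ (n - m) * ('X - 1) ^+ m) * (e m)%:P in
  let DDp := (1 + 'X) ^+ n.+1 - ('X - 1) ^+ n.+1 in
  Smat n.+1 k i j = (i == j)%:R + 2 * k^-1 * Np.[k^-1] / DDp.[k^-1]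
  /\ DDp.[k^-1] != 0.
Proof.
move=> hk U e Np DDp.
have k0 : k != 0 by rewrite gt_eqF //; lra.
have h1 : k * (1 + k^-1) = k + 1 by rewrite mulrDr mulr1 mulfV.
have h2 : k * (k^-1 - 1) = - (k - 1) by rewrite mulrBr mulfV // mulr1 opprB.
have hD : (k + 1) ^+ n.+1 - (- (k - 1)) ^+ n.+1 = k ^+ n.+1 * DDp.[k^-1].
  rewrite /DDp !hornerE -h1 -h2 !exprMn mulrBr.
  by [].
have hN : \sum_(m < n.+1) ((k + 1) ^+ (n - m) * (- (k - 1)) ^+ m) * e m
          = k ^+ n * Np.[k^-1].
  rewrite /Np horner_sum mulr_sumr; apply: eq_bigr => m _.
  rewrite !hornerE -h1 -h2 !exprMn mulrA; congr (_ * _).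
  have hm : (m <= n)%N by rewrite -ltnS ltn_ord.
  have -> : k ^+ n = k ^+ (n - m) * k ^+ m by rewrite -exprD subnK.
  rewrite /=; ring.
have Dp := @Dpos R n k hk.
have DD0 : DDp.[k^-1] != 0.
  apply/eqP => h; move: Dp; rewrite hD h mulr0; lra.
split => //.
rewrite Sform; last by rewrite gt_eqF.
rewrite !mxE summxE.
have -> : \sum_(m < n.+1) (((k + 1) ^+ (n - m) * (- (k - 1)) ^+ m) *:
     (shiftU R n.+1 ^+ m.+1 - shiftU R n.+1 ^+ m)) i j
   = \sum_(m < n.+1) ((k + 1) ^+ (n - m) * (- (k - 1)) ^+ m) * e m.
  by apply: eq_bigr => m _; rewrite !mxE.
rewrite hN hD exprS.
congr (_ + _).
field.
by rewrite DD0 k0 expf_neq0.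
Qed.

Lemma Seven (R : realType) n (i j : 'I_n.+1) (k : R) : 1 < k -> ~~ odd n.+1 ->
  let U := shiftU R n.+1 in
  let e := fun m : nat => (U ^+ m.+1) i j - (U ^+ m) i j in
  let Np := \sum_(m < n.+1) ((1 + 'X) ^+ (n - m) * ('X - 1) ^+ m) * (e m)%:P in
  let EEp := \sum_(l < n.+1) ((1 + 'X) ^+ (n - l) * (1 - 'X) ^+ l) in
  Smat n.+1 k i j = (i == j)%:R + Np.[k^-1] / EEp.[k^-1].
Proof.
move=> hk ev U e Np EEp.
have [-> DD0] := @Sentry R n i j k hk.
rewrite -/U -/e -/Np.
set t := k^-1.
have t0 : t != 0 by rewrite invr_neq0 // gt_eqF //; lra.
have hDD : ((1 + 'X) ^+ n.+1 - ('X - 1) ^+ n.+1 : {poly R}).[t] = 2 * t * EEp.[t].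
  have -> : ((1 + 'X) ^+ n.+1 - ('X - 1) ^+ n.+1 : {poly R}).[t]
     = (1 + t) ^+ n.+1 - (1 - t) ^+ n.+1.
    rewrite !hornerE; congr (_ - _).
    by rewrite -opprB exprNn -signr_odd (negbTE ev) expr0 mul1r.
  rewrite subrXX /EEp horner_sum.
  have -> : 1 + t - (1 - t) = 2 * t by ring.
  congr (_ * _); apply: eq_bigr => l _; rewrite !hornerE.
  by [].
move: DD0; rewrite hDD => DD0.
congr (_ + _).
have E0 : EEp.[t] != 0 by apply: contraNneq DD0 => ->; rewrite mulr0.
field.
by rewrite E0 t0.
Qed.

Lemma limOdd (R : realType) n (i j : 'I_n.+1) : odd n.+1 ->
  Smat n.+1 k i j @[k --> +oo] --> (1%:M : 'M[R]_n.+1) i j.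
Proof.
move=> od.
set U := shiftU R n.+1.
set e := fun m : nat => (U ^+ m.+1) i j - (U ^+ m) i j.
set Np := \sum_(m < n.+1) ((1 + 'X) ^+ (n - m) * ('X - 1) ^+ m) * (e m)%:P.
set DDp := ((1 + 'X) ^+ n.+1 - ('X - 1) ^+ n.+1 : {poly R}).
have H : \forall k \near +oo,
   (i == j)%:R + 2 * k^-1 * Np.[k^-1] / DDp.[k^-1] = Smat n.+1 k i j.
  exists 1; split; first by rewrite num_real.
  by move=> k hk; rewrite (@Sentry R n i j k hk).1.
have D0 : DDp.[0] = 2.
  rewrite /DDp !hornerE expr1n -signr_odd od expr1; ring.
have L : ((i == j)%:R + 2 * k^-1 * Np.[k^-1] / DDp.[k^-1]) @[k --> +oo]
   --> ((i == j)%:R + 2 * 0 * Np.[0] * (DDp.[0])^-1 : R).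
  apply: cvgD; first exact: cvg_cst.
  apply: cvgM; last first.
    apply: cvgV; first by rewrite D0 pnatr_eq0.
    exact: cvgPoly.
  apply: cvgM; last exact: cvgPoly.
  apply: cvgM; first exact: cvg_cst.
  exact: hinv.
rewrite mulr0 !mul0r addr0 in L.
apply: cvg_trans (near_eq_cvg H) _; rewrite mxE; exact: L.
Qed.

Lemma limEven (R : realType) n (i j : 'I_n.+1) : ~~ odd n.+1 ->
  Smat n.+1 k i j @[k --> +oo]
        --> ((i == j)%:R - 2 / n.+1%:R * (-1) ^+ (i + j)%N : R).
Proof.
move=> ev.
set U := shiftU R n.+1.
set e := fun m : nat => (U ^+ m.+1) i j - (U ^+ m) i j.
set Np := \sum_(m < n.+1) ((1 + 'X) ^+ (n - m) * ('X - 1) ^+ m) * (e m)%:P.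
set EEp := \sum_(l < n.+1) ((1 + 'X) ^+ (n - l) * (1 - 'X) ^+ l) : {poly R}.
have H : \forall k \near +oo,
   (i == j)%:R + Np.[k^-1] / EEp.[k^-1] = Smat n.+1 k i j.
  exists 1; split; first by rewrite num_real.
  by move=> k hk; rewrite (@Seven R n i j k hk ev).
have E0 : EEp.[0] = n.+1%:R.
  rewrite /EEp horner_sum.
  rewrite (eq_bigr (fun _ => 1)); last by move=> l _; rewrite !hornerE ?subr0 ?addr0 ?expr1n ?mulr1.
  by rewrite sumr_const card_ord.
have N0 : Np.[0] = - 2 * (-1) ^+ (i + j)%N.
  rewrite /Np horner_sum.
  rewrite (eq_bigr (fun m : 'I_n.+1 => (-1) ^+ m * (nat_of_ord j == (i.+1 + m) %% n.+1)%N%:R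
                   - (-1) ^+ m * (nat_of_ord j == (i + m) %% n.+1)%N%:R)); last first.
    move=> m _; rewrite !hornerE ?add0r ?addr0 ?sub0r ?expr1n ?mul1r /e /U !UX.
    rewrite mulrBr addSn addnS.
    reflexivity.
  rewrite big_split /= sumrN (@sum_sign R n.+1 i.+1 j ev) (@sum_sign R n.+1 i j ev).
  rewrite addSn exprS; ring.
have L : ((i == j)%:R + Np.[k^-1] / EEp.[k^-1]) @[k --> +oo]
   --> ((i == j)%:R + Np.[0] * (EEp.[0])^-1 : R).
  apply: cvgD; first exact: cvg_cst.
  apply: cvgM; first exact: cvgPoly.
  apply: cvgV; first by rewrite E0 pnatr_eq0.
  exact: cvgPoly.
rewrite N0 E0 in L.
have -> : ((i == j)%:R - 2 / n.+1%:R * (-1) ^+ (i + j)%N : R)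
   = (i == j)%:R + - 2 * (-1) ^+ (i + j)%N * (n.+1%:R)^-1.
  ring.
apply: cvg_trans (near_eq_cvg H) _; exact: L.
Qed.

Lemma lim_uniq (R : realType) (f : R -> R) (a b : R) :
  f k @[k --> +oo] --> a -> f k @[k --> +oo] --> b -> a = b.
Proof.
move=> ha hb.
by rewrite -(cvg_lim (@Rhausdorff R) ha) -(cvg_lim (@Rhausdorff R) hb).
Qed.

Theorem mainTheorem2 (R : realType) (d : nat) (hd : (3 <= d)%N) :
  (~~ odd d -> forall i j : 'I_d,
      Smat d k i j @[k --> +oo]
        --> ((i == j)%:R - 2 / d%:R * (-1) ^+ (i + j)%N : R)) /\
  (odd d -> forall i j : 'I_d,
      Smat d k i j @[k --> +oo] --> (1%:M : 'M[R]_d) i j) /\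
  (forall L : 'M[R]_d,
      (forall i j : 'I_d, Smat d k i j @[k --> +oo] --> L i j) -> L^T = L).
Proof.
case: d hd => [|n] hd; first by [].
split; first by move=> ev i j; exact: (@limEven R n i j ev).
split; first by move=> od i j; exact: (@limOdd R n i j od).
move=> L hL; apply/matrixP => i j; rewrite mxE.
case: (boolP (odd n.+1)) => par.
  rewrite (@lim_uniq R _ _ _ (hL j i) (@limOdd R n j i par)).
  rewrite (@lim_uniq R _ _ _ (hL i j) (@limOdd R n i j par)).
  by rewrite !mxE eq_sym.
rewrite (@lim_uniq R _ _ _ (hL j i) (@limEven R n j i par)).
rewrite (@lim_uniq R _ _ _ (hL i j) (@limEven R n i j par)).
by rewrite eq_sym addnC.
Qed.
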